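(* Let $p$ be an odd prime and let $0<r,s<p$ be integers with $r+s\neq p$. Then \[ b_{r,s}(\alpha)=\sum_{k=0}^{p-1}(-r/s)^k\binom{r\alpha-1}{p-1-k}\binom{s\alpha}{k} \] in $\mathbb F_p[\alpha]$.
   Context: $\mathbb F_p$ is the field of $p$ elements, $\alpha$ an indeterminate, $\binom{x}{m}=x(x-1)\cdots(x-m+1)/m!$. For integers $0<r,s<p$ (interpreted as elements of $\mathbb F_p$), $b_{r,s}(\alpha)$ is defined as $b_{r,s}(\alpha)=\sum_{k=0}^{p-1}(-r/s)^k\binom{r\alpha-1}{p-1-k}\binom{s\alpha-1}{k}\in\mathbb F_p[\alpha]$. *)

(* Defs.v *)
From HB Require Import structures.
From mathcomp Require Import all_boot all_order all_algebra.
Set Implicit Arguments. Unset Strict Implicit. Unset Printing Implicit Defensive.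
Import GRing.Theory.
Local Open Scope ring_scope.

(* Generalized binomial coefficient of a polynomial x :
   binom(x, m) = x (x-1) ... (x-m+1) / m!  (the inverse of m! is the
   field inverse; in all uses here m <= p-1 so m! is a unit in F_p). *)
Definition binomP (F : fieldType) (x : {poly F}) (m : nat) : {poly F} :=
  (m`!%:R)^-1 *: \prod_(i < m) (x - (i%:R)%:P).

Definition b_rs (p r s : nat) : {poly 'F_p} :=
  \sum_(k < p) (- (r%:R) / (s%:R) : 'F_p) ^+ k *:
     (binomP (r%:R *: 'X - 1) (p.-1 - k) * binomP (s%:R *: 'X - 1) k).

(* Main.v *)
Require Import Defs.
From HB Require Import structures.
From mathcomp Require Import all_boot all_order all_algebra all_field.
From mathcomp Require Import ring zify.
Import GRing.Theory.
Local Open Scope ring_scope.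

Lemma prod_ordR n (z : {poly 'I_n.+2}) :
  \prod_(x : 'I_n.+2) (z - x%:P) = \prod_(0 <= i < n.+2) (z - (i%:R : 'I_n.+2)%:P).
Proof. by rewrite big_mkord; apply eq_bigr => x _; rewrite natr_Zp. Qed.

Lemma prodQ p (hp : prime p) (z : {poly 'F_p}) :
  \prod_(i < p) (z - (i%:R : 'F_p)%:P) = z ^+ p - z.
Proof.
have h := finField_genPoly 'F_p.
rewrite card_Fp // in h.
have := congr1 (comp_poly z) h.
rewrite comp_polyB comp_Xn_poly comp_polyX => ->.
rewrite (big_morph (comp_poly z) (fst (comp_poly_multiplicative z)) (snd (comp_poly_multiplicative z))).
under eq_bigr => x _ do rewrite comp_polyB comp_polyX comp_polyC.
rewrite (@prod_ordR (Zp_trunc (pdiv p)) z).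
rewrite -(big_mkord xpredT (fun i => z - (i%:R : 'F_p)%:P)).
by rewrite [X in _ = \big[_/_]_(i <- index_iota 0 X) _](Fp_cast hp).
Qed.

Section G.
Variable F : fieldType.

Lemma binomP0 (z : {poly F}) : binomP z 0 = 1.
Proof. by rewrite /binomP big_ord0 fact0 invr1 scale1r. Qed.

Lemma binomP_shift (z : {poly F}) k : (k.+1)`!%:R != 0 :> F ->
  (k.+1)%:R%:P * binomP z k.+1 = (z - (k%:R)%:P) * binomP z k.
Proof.
rewrite factS natrM mulf_eq0 negb_or => /andP[ha hb].
rewrite /binomP big_ord_recr /= -!mul_polyC factS natrM invfM polyCM.
set P := \prod_(i < k) _.
have HA : ((k.+1)%:R)%:P * ((k.+1)%:R^-1)%:P = 1 :> {poly F}.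
  by rewrite -polyCM mulfV.
have -> : (k.+1)%:R%:P * ((k.+1)%:R^-1%:P * (k`!%:R^-1)%:P * (P * (z - (k%:R)%:P)))
  = (((k.+1)%:R)%:P * ((k.+1)%:R^-1)%:P) * ((k`!%:R^-1)%:P * (P * (z - (k%:R)%:P)))
  by ring.
by rewrite HA mul1r; ring.
Qed.

Lemma binomP_pascal (z : {poly F}) k : (k.+1)`!%:R != 0 :> F ->
  binomP (z + 1) k.+1 = binomP z k.+1 + binomP z k.
Proof.
rewrite factS natrM mulf_eq0 negb_or => /andP[ha hb].
rewrite /binomP [\prod_(i < k.+1) (z + 1 - _)]big_ord_recl [\prod_(i < k.+1) (z - _)]big_ord_recr.
rewrite /= -!mul_polyC factS natrM invfM polyCM.
under eq_bigr => i _ do rewrite /bump /= add1n mulrSr polyCD polyC1 opprD addrA addrAC addrK.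
set P := \prod_(i < k) _.
have HA : ((k.+1)%:R)%:P * ((k.+1)%:R^-1)%:P = 1 :> {poly F}.
  by rewrite -polyCM mulfV.
have -> : (k`!%:R^-1)%:P * P = (((k.+1)%:R)%:P * ((k.+1)%:R^-1)%:P) * ((k`!%:R^-1)%:P * P).
  by rewrite HA mul1r.
rewrite mulrSr polyCD subr0; ring.
Qed.
End G.

Lemma xB n (hp : prime n.+1) (a : 'F_n.+1) :
  (a *: 'X) * binomP (a *: 'X - 1) n = (n`!%:R)^-1 *: (a *: ('X^(n.+1) - 'X)).
Proof.
rewrite /binomP -scalerAr; congr (_ *: _).
have := @prodQ n.+1 hp (a *: 'X); rewrite big_ord_recl subr0.
have ha : a ^+ n.+1 = a by have := expf_card a; rewrite card_Fp.
rewrite exprZn ha -scalerBr => <-.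
congr (_ * _); apply: eq_bigr => i _.
rewrite lift0 /= mulrSr polyCD polyC1; ring.
Qed.

Theorem lemma17 (p r s : nat) :
  prime p -> odd p -> (0 < r < p)%N -> (0 < s < p)%N -> (r + s != p)%N ->
  b_rs p r s =
  \sum_(k < p) (- (r%:R) / (s%:R) : 'F_p) ^+ k *:
     (binomP (r%:R *: 'X - 1) (p.-1 - k) * binomP (s%:R *: 'X) k).
Proof.
move=> hp hodd /andP[r0 rp] /andP[s0 sp] hrs.
have hch := pchar_Fp hp.
have hnz : forall k, (0 < k < p)%N -> (k%:R : 'F_p) != 0.
  move=> k /andP[k0 kp]; rewrite -(dvdn_pcharf hch); apply/negP => /(dvdn_leq k0).
  by rewrite leqNgt kp.
have hfact : forall k, (k < p)%N -> (k`!%:R : 'F_p) != 0.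
  elim=> [|k IH] kp; first by rewrite fact0; apply: oner_neq0.
  rewrite factS natrM; apply: mulf_neq0; first by apply: hnz; rewrite kp.
  by apply: IH; apply: ltnW.
have hp0 : (p%:R : 'F_p) = 0 by apply/eqP; rewrite -(dvdn_pcharf hch).
have hrs0 : ((r + s)%:R : 'F_p) != 0.
  rewrite -(dvdn_pcharf hch); apply/negP => /dvdnP [q hq].
  case: q hq => [|[|q]] hq; [lia | lia | nia].
case: p hp hodd rp sp hrs hch hnz hfact hp0 hrs0 => [//|n] hp hodd rp sp hrs hch hnz hfact hp0 hrs0.
rewrite /b_rs.
set c := (- (r%:R) / (s%:R) : 'F_n.+1).
set x : {poly 'F_n.+1} := (r%:R : 'F_n.+1) *: 'X.
set y : {poly 'F_n.+1} := (s%:R : 'F_n.+1) *: 'X.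
set X : {poly 'F_n.+1} := x - 1.
set Y : {poly 'F_n.+1} := y - 1.
have E1 : forall i : 'I_n, binomP y i.+1 = binomP Y i.+1 + binomP Y i.
  move=> i; have -> : y = Y + 1 by rewrite /Y subrK.
  by apply: binomP_pascal; apply: hfact; rewrite ltnS ltn_ord.
rewrite [RHS]big_ord_recl [LHS]big_ord_recl.
under [X in _ = _ + X]eq_bigr => i _ do rewrite lift0 E1 mulrDr scalerDr.
under [X in _ + X = _]eq_bigr => i _ do rewrite lift0.
rewrite big_split addrA !binomP0.
have hn1 : (n%:R : 'F_n.+1) = -1.
  by apply/eqP; rewrite -subr_eq0 opprK -mulrSr hp0.
have hcs : c * s%:R = - r%:R.
  rewrite /c divfK //; apply: hnz; rewrite s0 sp //.
have hcy : c *: y = - x by rewrite /y /x scalerA hcs scaleNr.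
have hxy : x + y != 0.
  rewrite /x /y -scalerDl -natrD scaler_eq0 negb_or hrs0 polyX_eq0 //.
pose G j := binomP X (n - j) * binomP Y j.
have e1 : forall i : 'I_n, (X - (((n - i.+1)%N)%:R)%:P) * binomP X (n - i.+1)
   = ((n - i)%N)%:R *: binomP X (n - i).
  move=> i; have hk : ((n - i.+1).+1 = n - i)%N by have := ltn_ord i; lia.
  have := @binomP_shift _ X (n - i.+1); rewrite hk mul_polyC => <-; last first.
    apply: hfact; have := ltn_ord i; lia.
  by [].
have e2 : forall i : nat, (i < n)%N -> (Y - (i%:R)%:P) * binomP Y i = i.+1%:R *: binomP Y i.+1.
  move=> i hi; rewrite -mul_polyC binomP_shift //; apply: hfact; lia.
have exy : forall i : 'I_n, x + y = (X - (((n - i.+1)%N)%:R)%:P) + (Y - (i%:R)%:P).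
  move=> i.
  have hab : (((n - i.+1)%N)%:R + i%:R + 1 + 1 : 'F_n.+1) = 0.
    rewrite -hp0 -natrD -!mulrSr; congr (_%:R); have := ltn_ord i; lia.
  have hab' : ((((n - i.+1)%N)%:R)%:P + (i%:R)%:P + 1 + 1 : {poly 'F_n.+1}) = 0.
    by rewrite -polyC1 -!polyCD hab polyC0.
  rewrite -[LHS]subr0 -hab' /X /Y; ring.
have T1 : forall i : 'I_n, (x + y) * (binomP X (n - i.+1) * binomP Y i)
   = ((n - i)%N)%:R *: G i + (i.+1)%:R *: G i.+1.
  move=> i; rewrite (exy i).
  transitivity (((X - (((n - i.+1)%N)%:R)%:P) * binomP X (n - i.+1)) * binomP Y i
     + binomP X (n - i.+1) * ((Y - (i%:R)%:P) * binomP Y i)); first by ring.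
  rewrite e1 e2 ?ltn_ord // /G -!mul_polyC; ring.
have hA : (x + y) * (\sum_(i < n) c ^+ i.+1 *: (binomP X (n - i.+1) * binomP Y i))
   = \sum_(j < n.+1) (c ^+ j * (c * ((n - j)%N)%:R + j%:R)) *: G j.
  rewrite mulr_sumr.
  under eq_bigr => i _ do rewrite -scalerAr T1 scalerDr !scalerA.
  rewrite big_split.
  transitivity (\sum_(j < n.+1) (c ^+ j.+1 * ((n - j)%N)%:R) *: G j
     + \sum_(j < n.+1) (c ^+ j * j%:R) *: G j).
    congr (_ + _).
      rewrite big_ord_recr /= subnn mulr0n mulr0 scale0r addr0.
      by apply: eq_bigr => i _.
    rewrite big_ord_recl /= mulr0n mulr0 scale0r add0r.
    by apply: eq_bigr => i _.
  rewrite -big_split; apply: eq_bigr => j _ /=; rewrite -scalerDl exprS; congr (_ *: _); ring.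
have W : forall j : 'I_n.+1, (c * ((n - j)%N)%:R + j%:R)%:P
    = (X - (((n - j)%N)%:R)%:P) + c *: (Y - (j%:R)%:P).
  move=> j; rewrite natrB ?(leq_ord j) // hn1 /X /Y !scalerBr hcy -!mul_polyC.
  rewrite !(polyCD, polyCB, polyCM, polyCN, polyC1); ring.
have M : forall i : 'I_n, c ^+ i.+1 *: ((X - (((n - i.+1)%N)%:R)%:P) * G i.+1)
    + c ^+ i.+1 *: ((Y - (i%:R)%:P) * G i) = 0.
  move=> i; rewrite /G -scalerDr.
  transitivity (c ^+ i.+1 *: (((X - (((n - i.+1)%N)%:R)%:P) * binomP X (n - i.+1)) * binomP Y i.+1
     + binomP X (n - i) * ((Y - (i%:R)%:P) * binomP Y i))); first by congr (_ *: _); ring.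
  rewrite e1 e2 ?ltn_ord // -!mul_polyC.
  have hs : (((n - i)%N)%:R + (i.+1)%:R : 'F_n.+1) = 0.
    rewrite -natrD -hp0; congr (_%:R); have := ltn_ord i; lia.
  transitivity ((c ^+ i.+1)%:P * (((n - i)%N)%:R + (i.+1)%:R)%:P * (binomP X (n - i) * binomP Y i.+1)).
    rewrite polyCD; ring.
  by rewrite hs polyC0 mulr0 mul0r.
have hB : \sum_(j < n.+1) (c ^+ j * (c * ((n - j)%N)%:R + j%:R)) *: G j = 0.
  rewrite (eq_bigr (fun j : 'I_n.+1 => c ^+ j *: ((X - (((n - j)%N)%:R)%:P) * G j)
     + c ^+ j.+1 *: ((Y - (j%:R)%:P) * G j))); last first.
    move=> j _; rewrite exprSr -!mul_polyC [(c ^+ j * _)%:P]polyCM [(c ^+ j * c)%:P]polyCM W -mul_polyC; ring.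
  rewrite big_split big_ord_recl [X in _ + X = 0]big_ord_recr /=.
  have HS : \sum_(i < n) c ^+ bump 0 i *: ((X - (((n - bump 0 i)%N)%:R)%:P) * G (bump 0 i))
     + \sum_(i < n) c ^+ i.+1 *: ((Y - (i%:R)%:P) * G i) = 0.
    by rewrite -big_split; apply: big1 => i _; exact: M i.
  have L : forall (a b S1 S2 : {poly 'F_n.+1}), S1 + S2 = 0 -> a + S1 + (S2 + b) = a + b.
    by move=> a b S1 S2 h; rewrite addrA -(addrA a) h addr0.
  rewrite (L _ _ _ _ HS).
  rewrite /G expr0 scale1r subn0 subnn !binomP0 mulr1 mul1r.
  have hX : X - (n%:R)%:P = x by rewrite /X hn1 polyCN polyC1 opprK subrK.
  have hY : Y - (n%:R)%:P = y by rewrite /Y hn1 polyCN polyC1 opprK subrK.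
  have hc : c ^+ n.+1 = c by have := expf_card c; rewrite card_Fp.
  rewrite hX hY hc /X /Y /x /y !xB // !scalerA -scalerDl.
  have -> : (n`!%:R^-1 * r%:R + c * n`!%:R^-1 * s%:R : 'F_n.+1) = 0.
    by rewrite mulrAC hcs; ring.
  by rewrite scale0r.
have hD : \sum_(i < n) c ^+ i.+1 *: (binomP X (n - i.+1) * binomP Y i) = 0.
  have := hA; rewrite hB => /eqP; rewrite mulf_eq0 (negbTE hxy) orFb => /eqP.
  by [].
rewrite /= hD addr0.
by [].
Qed.
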